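(* Let $m\ge 2$ and $j\in[1,m-1]$ be integers, let $V=\wedge^j\mathbb{C}^m$, let $G$ be the image of $\mathrm{SL}_m(\mathbb{C})$ in $\mathrm{GL}(V)$ under the $j$-th exterior power map, and let $\mathfrak g\subset\mathrm{End}(V)$ be its Lie algebra. Then $G\cap\mathfrak g\neq\emptyset$ (as subsets of $\mathrm{End}(V)$). *)

(* Defs.v *)
From HB Require Import structures.
From mathcomp Require Import all_boot all_order all_algebra all_field.
Set Implicit Arguments. Unset Strict Implicit. Unset Printing Implicit Defensive.
Import GRing.Theory Num.Theory.
Local Open Scope ring_scope.

(* Exterior powers modelled in the standard basis e_S = e_{s_1} /\ ... /\ e_{s_j}
   (s_1 < ... < s_j) of wedge^j C^m, indexed by j-element subsets S of 'I_m.
   Here m = n.+1 (so that 'I_m is inhabited). *)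

Definition jsub (m j : nat) := {S : {set 'I_m} | #|S| == j}.

(* a-th smallest element of S (S is enumerated in increasing order) *)
Definition sel (n j : nat) (S : {set 'I_n.+1}) (a : 'I_j) : 'I_n.+1 :=
  nth ord0 (enum S) a.

Definition EndV (R : Type) (n j : nat) := jsub n.+1 j -> jsub n.+1 j -> R.

Definition wedge (R : comNzRingType) (n j : nat) (A : 'M[R]_n.+1) : EndV R n j :=
  fun S T => \det (\matrix_(a < j, b < j) A (sel (val S) a) (sel (val T) b)).
Arguments wedge {R n} j A _ _.

(* Differential at the identity of the exterior power map:
   d/dt wedge^j (1 + t X) |_{t=0}, i.e. the coefficient of t in the
   polynomial matrix wedge^j (1 + t X). *)
Definition dwedge (R : comNzRingType) (n j : nat) (X : 'M[R]_n.+1) : EndV R n j :=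
  fun S T => (wedge j (1%:M + 'X *: map_mx polyC X) S T)`_1.
Arguments dwedge {R n} j X _ _.

(* Main.v *)
Require Import Defs.
From HB Require Import structures.
From mathcomp Require Import all_boot all_order all_algebra all_field.
From mathcomp Require Import ring.
From Stdlib Require Import FunctionalExtensionality.
Set Implicit Arguments. Unset Strict Implicit. Unset Printing Implicit Defensive.
Import GRing.Theory Num.Theory.
Local Open Scope ring_scope.

Lemma sel_inj n j (S : {set 'I_n.+1}) : #|S| = j -> injective (@sel n j S).
Proof.
move=> hS a b /eqP; rewrite /sel nth_uniq ?enum_uniq -?cardE ?hS ?ltn_ord //.
by move=> /eqP; apply: val_inj.
Qed.

Lemma sel_in n j (S : {set 'I_n.+1}) (a : 'I_j) : #|S| = j -> sel S a \in S.
Proof.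
move=> hS; rewrite /sel -mem_enum; apply: mem_nth; by rewrite -cardE hS.
Qed.

Lemma sel_surj n j (S : {set 'I_n.+1}) i : #|S| = j -> i \in S ->
  exists a : 'I_j, sel S a = i.
Proof.
move=> hS iS.
have hi : (index i (enum S) < j)%N by rewrite -hS cardE index_mem mem_enum.
exists (Ordinal hi); by rewrite /sel /= nth_index // mem_enum.
Qed.

Lemma prod_sel (R : comNzRingType) n j (S : {set 'I_n.+1}) (F : 'I_n.+1 -> R) :
  #|S| = j -> \prod_(a < j) F (sel S a) = \prod_(i in S) F i.
Proof.
move=> hS.
transitivity (\prod_(0 <= a < j) F (nth ord0 (enum S) a)).
  by rewrite big_mkord; apply: eq_bigr.
rewrite -big_enum (big_nth ord0) /=.
have -> : size (enum (mem S)) = j by rewrite -hS cardE.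
by [].
Qed.

Lemma wedge_diag (R : comNzRingType) n j (d : 'rV[R]_n.+1) S T :
  wedge j (diag_mx d) S T = if S == T then \prod_(i in val S) d 0 i else 0.
Proof.
have hS : #|val S| = j by apply/eqP; exact: valP S.
have hT : #|val T| = j by apply/eqP; exact: valP T.
rewrite /wedge; case: eqP => [<-|neq].
  have -> : (\matrix_(a < j, b < j) diag_mx d (sel (val S) a) (sel (val S) b))
     = diag_mx (\row_a d 0 (sel (val S) a)).
    apply/matrixP => a b; rewrite !mxE (inj_eq (sel_inj hS)).
    by case: eqP => // ->.
  rewrite det_diag; under eq_bigr do rewrite mxE.
  exact: prod_sel.
have : ~~ (val S \subset val T).
  apply/negP => sub; apply: neq; apply: val_inj; apply/eqP.
  by rewrite eqEcard sub hS hT leqnn.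
case/subsetPn => i iS iT.
have [a ha] := sel_surj hS iS.
rewrite (expand_det_row _ a) big1 // => b _; rewrite !mxE.
case: eqP => [e|]; last by rewrite mulr0n mul0r.
by move: iT; rewrite -ha e sel_in.
Qed.

Lemma coef_prod1 (I : finType) (P : pred I) (c : I -> algC) :
  (\prod_(i | P i) (1 + c i *: 'X))`_1 = \sum_(i | P i) c i.
Proof.
suff [] : (\prod_(i | P i) (1 + c i *: 'X))`_0 = 1 /\ (\prod_(i | P i) (1 + c i *: 'X))`_1 = \sum_(i | P i) c i by [].
elim/big_rec2: _; first by rewrite !coef1.
move=> i s p _ [h0 h1]; rewrite mulrDl mul1r -scalerAl !coefD !coefZ !coefXM /=.
by rewrite h0 h1 mulr0 addr0 mulr1 addrC.
Qed.

Lemma diag_poly n (x : 'rV[algC]_n.+1) :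
  1%:M + 'X *: map_mx polyC (diag_mx x) = diag_mx (\row_i (1 + x 0 i *: 'X)).
Proof.
apply/matrixP => i k; rewrite !mxE; case: eqP => _ /=.
  by rewrite !mulr1n -mul_polyC mulrC.
by rewrite !mulr0n polyC0 mulr0 addr0.
Qed.

Theorem lemma8 (n j : nat) (hm : (1 <= n)%N) (hj1 : (1 <= j)%N) (hj2 : (j <= n)%N) :
  exists (g X : 'M[algC]_n.+1),
    \det g = 1 /\ \tr X = 0 /\ wedge j g = dwedge j X.
Proof.
case: j hj1 hj2 => [//|k] _ hk.
have hk0 : (k.+1%:R : algC) != 0 by rewrite pnatr_eq0.
have hkm : (k.+1%:R - n.+1%:R : algC) != 0.
  by rewrite subr_eq0 eqr_nat eqSS (ltn_eqF hk).
have hk0' : (1 + k%:R : algC) != 0 by rewrite addrC natr1.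
have hkm' : (1 + k%:R - (1 + n%:R) : algC) != 0 by rewrite !(addrC 1) !natr1.
pose r : algC := k.+1%:R / (k.+1%:R - n.+1%:R).
pose b := n.+1.-root r.
have hb : b ^+ n.+1 = r by rewrite /b rootCK.
pose a := b * (k.+1%:R - n.+1%:R) / k.+1%:R.
pose x := b ^+ k.+1 / k.+1%:R.
pose y := - (n%:R * x).
pose d := \row_(i < n.+1) (if i == ord0 then a else b).
pose c := \row_(i < n.+1) (if i == ord0 then y else x).
have hl : forall i : 'I_n, (lift ord0 i == ord0) = false.
  by move=> i; apply/negbTE; rewrite eq_sym neq_lift.
exists (diag_mx d), (diag_mx c); split; [|split].
- rewrite det_diag big_ord_recl !mxE eqxx.
  under eq_bigr do rewrite mxE hl.
  rewrite prodr_const card_ord.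
  have -> : a * b ^+ n = b ^+ n.+1 * ((k.+1%:R - n.+1%:R) / k.+1%:R).
    by rewrite /a exprS; ring.
  rewrite hb /r; field; by rewrite hk0' hkm'.
- rewrite mxtrace_diag big_ord_recl !mxE eqxx.
  under eq_bigr do rewrite mxE hl.
  by rewrite sumr_const card_ord /y mulr_natl addNr.
apply: functional_extensionality => S; apply: functional_extensionality => T.
rewrite /dwedge diag_poly !wedge_diag; case: eqP => _; last by rewrite coef0.
rewrite [in RHS](eq_bigr (fun i => 1 + c 0 i *: 'X)); last by move=> i _; rewrite mxE.
rewrite coef_prod1.
have hS : #|val S| = k.+1 by apply/eqP; exact: valP S.
case: (boolP (ord0 \in val S)) => h0.
  have hc : #|val S :\ ord0| = k.
    by move/eqP: hS; rewrite (cardsD1 ord0) h0 add1n eqSS => /eqP.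
  rewrite (big_setD1 _ h0) (big_setD1 _ h0) /= !mxE eqxx.
  rewrite [in LHS](eq_bigr (fun _ => b)); last first.
    by move=> i; rewrite in_setD1 mxE => /andP [/negbTE -> _].
  rewrite [in RHS](eq_bigr (fun _ => x)); last first.
    by move=> i; rewrite in_setD1 mxE => /andP [/negbTE -> _].
  rewrite prodr_const sumr_const hc /a /y /x -mulr_natl exprS.
  field; by rewrite hk0'.
rewrite [in LHS](eq_bigr (fun _ => b)); last first.
  by move=> i iS; rewrite mxE; case: eqP iS => // ->; rewrite (negbTE h0).
rewrite [in RHS](eq_bigr (fun _ => x)); last first.
  by move=> i iS; rewrite mxE; case: eqP iS => // ->; rewrite (negbTE h0).
rewrite prodr_const sumr_const hS /x -mulr_natl.
field; by rewrite hk0'.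
Qed.
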